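(* Let $\mathcal{R}=(\mathcal{F},R)$ be a 3-DCTRS. If for every rule $\ell\to r\Leftarrow c$ in $R$ the partial grounding $c^{\downarrow \mathrm{Var}(\ell)}$ of $c$ is $\overline{\mathcal{R}}$-feasible, then the transformation $\mathcal{U}$ preserves $\to_{\mathcal{R}}$-irreducibility of $\mathcal{R}$.
   Context: An oriented CTRS $\mathcal{R}=(\mathcal{F},R)$ has rules $\ell\to r\Leftarrow s_1\approx t_1,\dots,s_n\approx t_n$ ($\ell$ not a variable) where conditions are reachability tests: $s\to_{\mathcal{R}}t$ iff there are a rule, a position $p$ and a substitution $\sigma$ with $s|_p=\sigma(\ell)$, $\sigma(s_j)\to^*_{\mathcal{R}}\sigma(t_j)$ for all $j$, and $t=s[\sigma(r)]_p$. It is deterministic (a DCTRS) if for each rule and $1\le i\le n$, $\mathrm{Var}(s_i)\subseteq\mathrm{Var}(\ell)\cup\bigcup_{j<i}\mathrm{Var}(t_j)$; it is a 3-CTRS if $\mathrm{Var}(r)\subseteq\mathrm{Var}(\ell)\cup\mathrm{Var}(c)$ for each rule. The theory $\overline{\mathcal{R}}$ is the first-order theory axiomatizing $\to$ and $\to^*$ (reflexivity of $\to^*$, $x\to y\wedge y\to^* z\Rightarrow x\to^*z$, closure of $\to$ under all argument positions, each rule as the implication $s_1\to^*t_1\wedge\dots\wedge s_n\to^* t_n\Rightarrow \ell\to r$), so that $\overline{\mathcal{R}}\vdash s\to^* t$ iff $s\to^*_{\mathcal{R}}t$. For a set $V$ of variables, the partial grounding $c^{\downarrow V}$ replaces every variable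 $x\in V$ occurring in $c$ by a fresh constant $c_x$ (distinct variables giving distinct constants not in $\mathcal{F}$). A sequence of conditions $s_1\approx t_1,\dots,s_n\approx t_n$ is $\overline{\mathcal{R}}$-feasible if there is a substitution $\sigma$ with $\overline{\mathcal{R}}\vdash\sigma(s_j)\to^*\sigma(t_j)$ for all $j$. Transformation $\mathcal{U}$: each conditional rule $\alpha:\ell\to r\Leftarrow s_1\approx t_1,\dots,s_n\approx t_n$ ($n\ge1$) becomes $\ell\to U^\alpha_1(s_1,\vec x_1)$, $U^\alpha_{i-1}(t_{i-1},\vec x_{i-1})\to U^\alpha_i(s_i,\vec x_i)$ ($2\le i\le n$), $U^\alpha_n(t_n,\vec x_n)\to r$, with fresh symbols $U^\alpha_i$ and $\vec x_i$ a sequence of the variables in $\mathrm{Var}(\ell)\cup\mathrm{Var}(t_1)\cup\dots\cup\mathrm{Var}(t_{i-1})$; unconditional rules are kept; $\mathcal{U}(\mathcal{R})$ is the resulting TRS. $\mathcal{U}$ preserves $\to_{\mathcal{R}}$-irreducibility if every $\to_{\mathcal{R}}$-irreducible term over $\mathcal{F}$ and variables is $\to_{\mathcal{U}(\mathcal{R})}$-irreducible. *)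

(* Defs.v *)
From Stdlib Require List.
From mathcomp Require Import all_boot.
Set Implicit Arguments. Unset Strict Implicit. Unset Printing Implicit Defensive.

Inductive term (S V : Type) : Type :=
| Var : V -> term S V
| Fun : S -> seq (term S V) -> term S V.
Arguments Var {S V}.
Arguments Fun {S V}.

Fixpoint vars (S : Type) (V : Type) (t : term S V) : seq V :=
  match t with
  | Var x => [:: x]
  | Fun _ ts => flatten (map (@vars S V) ts)
  end.

Fixpoint subst (S V : Type) (sigma : V -> term S V) (t : term S V) : term S V :=
  match t with
  | Var x => sigma x
  | Fun f ts => Fun f (map (subst sigma) ts)
  end.

Fixpoint map_sym (S S' V : Type) (h : S -> S') (t : term S V) : term S' V :=
  match t with
  | Var x => Var x
  | Fun f ts => Fun (h f) (map (map_sym h) ts)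
  end.

Record crule (S V : Type) : Type := CRule {
  lhs : term S V;
  rhs : term S V;
  conds : seq (term S V * term S V) }.
Arguments CRule {S V}.

Definition map_rule (S S' V : Type) (h : S -> S') (rl : crule S V) : crule S' V :=
  CRule (map_sym h (lhs rl)) (map_sym h (rhs rl))
        (map (fun c => (map_sym h c.1, map_sym h c.2)) (conds rl)).

(* A CTRS is given by its (possibly infinite) set of rules R. *)

(* ---------- Oriented conditional rewriting: ->_R and ->*_R ----------
   This inductive definition is the least model of the Horn theory R-bar
   (reflexivity/transitivity of ->*, closure of -> under argument positions,
   each rule as an implication); hence "R-bar |- s ->* t" is csteps R s t. *)
Inductive cstep (S V : Type) (R : crule S V -> Prop) : term S V -> term S V -> Prop :=
| cstep_rule (rl : crule S V) (sigma : V -> term S V) :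
    R rl ->
    (forall c, List.In c (conds rl) -> csteps R (subst sigma c.1) (subst sigma c.2)) ->
    cstep R (subst sigma (lhs rl)) (subst sigma (rhs rl))
| cstep_ctx (f : S) (l1 : seq (term S V)) (t u : term S V) (l2 : seq (term S V)) :
    cstep R t u -> cstep R (Fun f (l1 ++ t :: l2)) (Fun f (l1 ++ u :: l2))
with csteps (S V : Type) (R : crule S V -> Prop) : term S V -> term S V -> Prop :=
| csteps_refl (t : term S V) : csteps R t t
| csteps_step (t u v : term S V) : cstep R t u -> csteps R u v -> csteps R t v.

Definition irreducible (S V : Type) (R : crule S V -> Prop) (t : term S V) : Prop :=
  forall u, ~ cstep R t u.

Definition is_var (S V : Type) (t : term S V) : bool :=
  if t is Var _ then true else false.

Section Classes.
Variables (F : Type) (V : eqType).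

Definition vars_upto (rl : crule F V) (k : nat) (x : V) : bool :=
  (x \in vars (lhs rl)) || has (fun c => x \in vars c.2) (take k (conds rl)).

Definition deterministic_rule (rl : crule F V) : Prop :=
  forall i, i < size (conds rl) ->
  forall x, x \in vars (nth (lhs rl, lhs rl) (conds rl) i).1 -> vars_upto rl i x.

Definition type3_rule (rl : crule F V) : Prop :=
  forall x, x \in vars (rhs rl) ->
    (x \in vars (lhs rl)) ||
    has (fun c => (x \in vars c.1) || (x \in vars c.2)) (conds rl).

Definition is_3DCTRS (R : crule F V -> Prop) : Prop :=
  forall rl, R rl -> [/\ ~~ is_var (lhs rl), deterministic_rule rl & type3_rule rl].

(* ---------- Partial grounding and feasibility ----------
   The fresh constant c_x is  Fun (inr x) [::]  over the signature F + V. *)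
Fixpoint ground_term (P : V -> bool) (t : term F V) : term (F + V) V :=
  match t with
  | Var x => if P x then Fun (inr x) [::] else Var x
  | Fun f ts => Fun (inl f) (map (ground_term P) ts)
  end.

Definition ground_conds (P : V -> bool) (c : seq (term F V * term F V)) :
  seq (term (F + V) V * term (F + V) V) :=
  map (fun st => (ground_term P st.1, ground_term P st.2)) c.

Definition liftR (S' : Type) (h : F -> S') (R : crule F V -> Prop) : crule S' V -> Prop :=
  fun rl' => exists2 rl, R rl & rl' = map_rule h rl.

Definition feasible (S : Type) (R : crule S V -> Prop) (c : seq (term S V * term S V)) : Prop :=
  exists sigma : V -> term S V,
    forall st, List.In st c -> csteps R (subst sigma st.1) (subst sigma st.2).

(* ---------- The unraveling U ----------
   Symbols of U(R): F plus fresh symbols U^alpha_i, encoded as inr (alpha, i).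
   [xs alpha i] is the chosen sequence of variables  x_i  for rule alpha. *)
Definition Usig := (F + (crule F V * nat))%type.

Definition valid_xs (R : crule F V -> Prop) (xs : crule F V -> nat -> seq V) : Prop :=
  forall rl, R rl -> forall i, 1 <= i <= size (conds rl) ->
    uniq (xs rl i) /\ forall x, (x \in xs rl i) = vars_upto rl i.-1 x.

Definition Uterm (rl : crule F V) (xs : crule F V -> nat -> seq V) (i : nat)
  (t : term F V) : term Usig V :=
  Fun (inr (rl, i)) (map_sym inl t :: map Var (xs rl i)).

Definition Urules (R : crule F V -> Prop) (xs : crule F V -> nat -> seq V) :
  crule Usig V -> Prop :=
  fun rl' => exists2 rl, R rl &
    let n := size (conds rl) in
    let s i := (nth (lhs rl, lhs rl) (conds rl) i.-1).1 in
    let t i := (nth (lhs rl, lhs rl) (conds rl) i.-1).2 in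
    (n = 0 /\ rl' = map_rule inl rl) \/
    (0 < n /\
     (rl' = CRule (map_sym inl (lhs rl)) (Uterm rl xs 1 (s 1)) [::] \/
      (exists2 i, 2 <= i <= n &
         rl' = CRule (Uterm rl xs i.-1 (t i.-1)) (Uterm rl xs i (s i)) [::]) \/
      rl' = CRule (Uterm rl xs n (t n)) (map_sym inl (rhs rl)) [::])).

Definition U_preserves_irreducibility (R : crule F V -> Prop)
  (xs : crule F V -> nat -> seq V) : Prop :=
  forall t : term F V, irreducible R t -> irreducible (Urules R xs) (map_sym inl t).

End Classes.

(* Main.v *)
Require Import Defs.
From mathcomp Require Import all_boot.
From Stdlib Require List.
Set Implicit Arguments. Unset Strict Implicit.

Fixpoint term_ind' (S V : Type) (P : term S V -> Prop)
  (Hv : forall x, P (Var x))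
  (Hf : forall f ts, (forall t, List.In t ts -> P t) -> P (Fun f ts)) (t : term S V) : P t :=
  match t with
  | Var x => Hv x
  | Fun f ts => Hf f ts ((fix aux (ts : seq (term S V)) : forall t, List.In t ts -> P t :=
       match ts with
       | nil => fun _ H => False_ind _ H
       | cons u us => fun t H => match H with
                      | or_introl e => eq_ind u P (term_ind' Hv Hf u) t e
                      | or_intror H' => aux us t H' end
       end) ts)
  end.

Lemma map_ext_In (A B : Type) (f g : A -> B) (s : seq A) :
  (forall a, List.In a s -> f a = g a) -> map f s = map g s.
Proof.
elim: s => //= a s IH H; rewrite H; last by left.
by rewrite IH // => b Hb; apply: H; right.
Qed.

Fixpoint unmap (F S' V : Type) (g : S' -> term F V) (t : term (F + S') V) : term F V :=
  match t with
  | Var x => Var x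
  | Fun (inl f) ts => Fun f (map (unmap g) ts)
  | Fun (inr s) _ => g s
  end.

Lemma unmap_subst_inl (F S' V : Type) (g : S' -> term F V) sigma (u : term F V) :
  unmap g (subst sigma (map_sym inl u)) = subst (fun x => unmap g (sigma x)) u.
Proof.
elim/term_ind': u => [x|f ts IH] //=.
rewrite -!map_comp; congr Fun; apply: map_ext_In => t Ht /=; exact: IH.
Qed.

Lemma mem_flatten_In (S : Type) (V : eqType) (ts : seq (term S V)) t x :
  List.In t ts -> x \in vars t -> x \in flatten (map (@vars S V) ts).
Proof.
elim: ts => //= a s IHs [->|Ht] Hx; rewrite mem_cat ?Hx //.
by rewrite IHs ?orbT.
Qed.

Lemma unmap_inl (F S' V : Type) (g : S' -> term F V) (u : term F V) :
  unmap g (map_sym inl u) = u.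
Proof.
elim/term_ind': u => [x|f ts IH] //=.
rewrite -map_comp; congr Fun; rewrite -[RHS]map_id; exact: map_ext_In.
Qed.

Lemma subst_ext (S : Type) (V : eqType) (s1 s2 : V -> term S V) (u : term S V) :
  (forall x, x \in vars u -> s1 x = s2 x) -> subst s1 u = subst s2 u.
Proof.
elim/term_ind': u => [x|f ts IH] /= H; first by apply: H; rewrite inE.
congr Fun; apply: map_ext_In => t Ht; apply: IH => // x Hx; apply: H.
exact: (mem_flatten_In Ht Hx).
Qed.

Section Lift.
Variables (F S' : Type) (V : eqType) (R : crule F V -> Prop) (g : S' -> term F V).

Scheme cstep_mut := Induction for cstep Sort Prop
with csteps_mut := Induction for csteps Sort Prop.

Lemma csteps_trans_ (S W : Type) (Q : crule S W -> Prop) a b c :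
  csteps Q a b -> csteps Q b c -> csteps Q a c.
Proof.
elim=> // t u v H _ IH Hc; exact: csteps_step H (IH Hc).
Qed.

Lemma csteps_ctx_ (S W : Type) (Q : crule S W -> Prop) f l1 l2 a b :
  csteps Q a b -> csteps Q (Fun f (l1 ++ a :: l2)) (Fun f (l1 ++ b :: l2)).
Proof.
elim=> [t|t u v H _ IH]; first exact: csteps_refl.
exact: csteps_step (cstep_ctx _ _ _ H) IH.
Qed.

Lemma lift_steps a b : csteps (liftR inl R) a b -> csteps R (unmap g a) (unmap g b).
Proof.
apply: (@csteps_mut (F + S')%type V (liftR inl R) (fun u v _ => csteps R (unmap g u) (unmap g v))
                   (fun u v _ => csteps R (unmap g u) (unmap g v))).
- move=> rl' sigma [rl Hrl ->] _ IH /=.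
  rewrite !unmap_subst_inl; apply: csteps_step (csteps_refl _ _).
  apply: cstep_rule => // c Hc.
  have := IH (map_sym inl c.1, map_sym inl c.2).
  rewrite !unmap_subst_inl /=; apply.
  exact: (List.in_map (fun c => (map_sym inl c.1, map_sym inl c.2))).
- move=> [f|s] l1 t u l2 _ IH /=; last exact: csteps_refl.
  rewrite !map_cat /=; exact: csteps_ctx_.
- move=> t; exact: csteps_refl.
- move=> t u w _ IH1 _ IH2; exact: csteps_trans_ IH1 IH2.
Qed.
End Lift.

Lemma unmap_ground (F : Type) (V : eqType) (P : V -> bool) (g : V -> term F V) tau
  (s : term F V) :
  unmap g (subst tau (ground_term P s)) =
  subst (fun x => if P x then g x else unmap g (tau x)) s.
Proof.
elim/term_ind': s => [x|f ts IH] /=; first by case: (P x).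
rewrite -!map_comp; congr Fun; apply: map_ext_In => t Ht /=; exact: IH.
Qed.

Theorem proposition30 (F : Type) (V : eqType) (R : crule F V -> Prop)
  (xs : crule F V -> nat -> seq V) :
  is_3DCTRS R ->
  valid_xs R xs ->
  (forall rl, R rl ->
     feasible (liftR inl R)
       (ground_conds (fun x => x \in vars (lhs rl)) (conds rl))) ->
  U_preserves_irreducibility R xs.
Proof.
move=> _ _ Hfeas t Hirr u Hstep.
suff: forall a b, cstep (Urules R xs) a b -> forall t, a = map_sym inl t ->
        exists w, cstep R t w.
  by move/(_ _ _ Hstep t erefl) => [w Hw]; exact: (Hirr w).
move=> a b {Hstep Hirr t u}; elim => [rl' sigma Hrl' _ | f l1 t0 u0 l2 _ IH] t Ht.
- pose g := fun p : crule F V * nat => lhs p.1.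
  have Hmatch : forall rl, lhs rl' = map_sym inl (lhs rl) ->
      t = subst (fun x => unmap g (sigma x)) (lhs rl).
    move=> rl E; rewrite E in Ht.
    have := f_equal (unmap g) Ht.
    by rewrite unmap_subst_inl unmap_inl => <-.
  case: Hrl' => rl Hrl [[Hn E0]|[Hn [E|[[i _ E]|E]]]].
  + have -> := Hmatch rl (f_equal (@lhs _ _) E0).
    exists (subst (fun x => unmap g (sigma x)) (rhs rl)).
    apply: cstep_rule => // c; by rewrite (size0nil Hn).
  + have Et := Hmatch rl (f_equal (@lhs _ _) E).
    set sigma0 := (fun x => unmap g (sigma x)) in Et.
    have [tau Htau] := Hfeas rl Hrl.
    pose theta := fun x => if x \in vars (lhs rl) then sigma0 x
                           else unmap sigma0 (tau x).
    exists (subst theta (rhs rl)).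
    have -> : t = subst theta (lhs rl).
      by rewrite Et; apply: subst_ext => x Hx; rewrite /theta Hx.
    apply: cstep_rule => // c Hc.
    have := lift_steps sigma0 (Htau _ (List.in_map
      (fun st => (ground_term (fun x => x \in vars (lhs rl)) st.1,
                  ground_term (fun x => x \in vars (lhs rl)) st.2)) _ _ Hc)).
    by rewrite /= !unmap_ground.
  + by move: Ht; rewrite E; case: t Hmatch.
  + by move: Ht; rewrite E; case: t Hmatch.
- case: t Ht => // [h ts] [Ef Ets].
  have Hd : map (map_sym inl) (drop (size l1) ts) = t0 :: l2.
    by rewrite map_drop -Ets drop_size_cat.
  case Edr: (drop (size l1) ts) Hd => [|t' ts2] //= [E1 _].
  have [w Hw] := IH t' (esym E1).
  exists (Fun h (take (size l1) ts ++ w :: ts2)).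
  rewrite -{1}(cat_take_drop (size l1) ts) Edr; exact: cstep_ctx.
Qed.
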